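(* Let $G$ be a group with finite generating set $Y$ and let $\mathscr S$ be a retractive family of subsets of $Y$. Then the kernel of $\rho_{\mathscr S}=\prod_{S\in\mathscr S}\rho_S\colon G\to\prod_{S\in\mathscr S}G_S$ is generated by monic commutators whose support is transverse to $\mathscr S$.
   Context: Conventions: $[x,y]=x^{-1}y^{-1}xy$. For $S\subseteq Y$, $G_S$ is the quotient of $G$ by the normal closure of $Y-S$, and $\rho_S\colon G\to G_S$ is the projection. $S$ is retractive if $\rho_S$ restricts to an injection on the subgroup $\langle S\rangle$ ($\emptyset$ is retractive by convention). A retractive family is a family of retractive subsets of $Y$ all of whose intersections are also retractive. The support of $q\in G$ relative to $\mathscr S$ is $\bigcap\{S\in\mathscr S: q\in\langle S\rangle\}$. Monic commutators: for $x\in Y$, $x$ and $x^{-1}$ are monic commutators; if $x,y$ are monic commutators then so is $[x,y]$. A subset $T\subseteq Y$ is transverse to $\mathscr S$ if $T\not\subseteq S$ for every $S\in\mathscr S$. *)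

(* Defs.v *)
From mathcomp Require Import all_boot.
Set Implicit Arguments. Unset Strict Implicit. Unset Printing Implicit Defensive.

Record group := Group {
  gcar :> Type;
  gmul : gcar -> gcar -> gcar;
  gone : gcar;
  ginv : gcar -> gcar;
  gmulA : forall x y z, gmul x (gmul y z) = gmul (gmul x y) z;
  gmul1 : forall x, gmul gone x = x;
  gmulV : forall x, gmul (ginv x) x = gone
}.

Section Defs.
Variable G : group.
Local Notation "x * y" := (gmul x y).
Local Notation "x ^-1" := (ginv x).

Definition gcomm (x y : G) : G := x^-1 * (y^-1 * (x * y)).

Inductive gen (A : G -> Prop) : G -> Prop :=
| gen_in x : A x -> gen A x
| gen_one : gen A (gone G)
| gen_mul x y : gen A x -> gen A y -> gen A (x * y)
| gen_inv x : gen A x -> gen A (x^-1).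

Definition ncl (A : G -> Prop) : G -> Prop :=
  gen (fun x => exists a g, A a /\ x = g^-1 * (a * g)).

(* Generators: Y is the image of an injective map y from a finite index type I;
   subsets of Y are encoded as {set I}. *)
Variables (I : finType) (y : I -> G).

Definition span (S : {set I}) : G -> Prop := gen (fun g => exists2 i, i \in S & g = y i).

(* kernel of rho_S : G -> G_S, i.e. normal closure of Y - S *)
Definition Nker (S : {set I}) : G -> Prop := ncl (fun g => exists2 i, i \notin S & g = y i).

(* rho_S a = rho_S b in G_S = G / Nker S *)
Definition rho_eq (S : {set I}) (a b : G) : Prop := Nker S (a^-1 * b).

Definition retractive (S : {set I}) : Prop :=
  forall a b, span S a -> span S b -> rho_eq S a b -> a = b.

(* all intersections of members of the family (including single members) retractive;
   the empty subfamily gives Y, which is trivially retractive. *)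
Definition retractive_family (F : {set {set I}}) : Prop :=
  forall F' : {set {set I}}, F' \subset F -> retractive (\bigcap_(S in F') S).

Definition rho_family_ker (F : {set {set I}}) (g : G) : Prop :=
  forall S, S \in F -> rho_eq S g (gone G).

Inductive monic_commutator : G -> Prop :=
| monic_gen i : monic_commutator (y i)
| monic_geninv i : monic_commutator ((y i)^-1)
| monic_comm a b : monic_commutator a -> monic_commutator b -> monic_commutator (gcomm a b).

Definition supp_rel (F : {set {set I}}) (q : G) (i : I) : Prop :=
  forall S, S \in F -> span S q -> i \in S.

Definition transverse (F : {set {set I}}) (T : I -> Prop) : Prop :=
  forall S, S \in F -> ~ (forall i, T i -> i \in S).

End Defs.

(* Main.v *)
From Stdlib Require Import Classical.
Require Import Defs.
From mathcomp Require Import all_boot.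
Set Implicit Arguments. Unset Strict Implicit.

Section GL.
Variable G : group.
Local Notation "x * y" := (gmul x y).
Local Notation "x ^-1" := (ginv x).
Local Notation one := (gone G).

Lemma mulKg (x z : G) : x^-1 * (x * z) = z.
Proof. by rewrite gmulA gmulV gmul1. Qed.
Lemma mulgV (x : G) : x * x^-1 = one.
Proof.
rewrite -[x * _]gmul1 -{1}(gmulV (x^-1)) -gmulA (gmulA x^-1 x) gmulV gmul1.
by rewrite gmulV.
Qed.
Lemma mulg1 (x : G) : x * one = x.
Proof. by rewrite -(gmulV x) gmulA mulgV gmul1. Qed.
Lemma invgK (x : G) : (x^-1)^-1 = x.
Proof. by rewrite -[LHS]mulg1 -(gmulV x) gmulA gmulV gmul1. Qed.
Lemma mulKVg (x z : G) : x * (x^-1 * z) = z.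
Proof. by rewrite gmulA mulgV gmul1. Qed.
Lemma mulgK (x z : G) : (x * z) * z^-1 = x.
Proof. by rewrite -gmulA mulgV mulg1. Qed.
Lemma invg_uniq (a b : G) : a * b = one -> a = b^-1.
Proof. by move=> h; rewrite -(mulgK a b) h gmul1. Qed.
Lemma invMg (a b : G) : (a * b)^-1 = b^-1 * a^-1.
Proof. symmetry; apply: invg_uniq. by rewrite -gmulA (gmulA _ a) gmulV gmul1 gmulV. Qed.
Lemma invg1 : one^-1 = one.
Proof. symmetry; apply: invg_uniq; exact: gmul1. Qed.

Definition conj (h m : G) := h^-1 * (m * h).
Lemma conjM h a b : conj h (a * b) = conj h a * conj h b.
Proof. by rewrite /conj !gmulA mulgK. Qed.
Lemma conjV h a : conj h (a^-1) = (conj h a)^-1.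
Proof. by rewrite /conj !invMg invgK gmulA. Qed.
Lemma conj1 h : conj h one = one.
Proof. by rewrite /conj gmul1 gmulV. Qed.
Lemma conjMg h1 h2 m : conj (h1 * h2) m = conj h2 (conj h1 m).
Proof. by rewrite /conj invMg !gmulA. Qed.
Lemma conjVK h m : conj (h^-1) (conj h m) = m.
Proof. by rewrite -conjMg mulgV /conj invg1 gmul1 mulg1. Qed.
Lemma conj_comm z c : conj z c = c * gcomm c z.
Proof. by rewrite /gcomm mulKVg. Qed.

Lemma gen_mono (A B : G -> Prop) x : (forall a, A a -> gen B a) -> gen A x -> gen B x.
Proof.
move=> hAB; elim=> {x} [x /hAB //| | x z _ hx _ hz | x _ hx].
- exact: gen_one. - exact: gen_mul. - exact: gen_inv.
Qed.

Lemma gen_conj (A : G -> Prop) h x : (forall a, A a -> gen A (conj h a)) -> gen A x -> gen A (conj h x).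
Proof.
move=> hA; elim=> {x} [x /hA //| | x z _ hx _ hz | x _ hx].
- rewrite conj1; exact: gen_one.
- rewrite conjM; exact: gen_mul.
- rewrite conjV; exact: gen_inv.
Qed.

Lemma ncl_conj (A : G -> Prop) h x : ncl A x -> ncl A (conj h x).
Proof.
apply: gen_conj => _ [a [g [Aa ->]]]; apply: gen_in; exists a, (g * h).
by split=> //; rewrite -[_ * (_ * _)]/(conj g a) -conjMg.
Qed.
Lemma conj_one m : conj one m = m.
Proof. by rewrite /conj invg1 gmul1 mulg1. Qed.
Lemma mulgVK (x z : G) : (x * z^-1) * z = x.
Proof. by rewrite -gmulA gmulV mulg1. Qed.
End GL.
Arguments conj {G}.
Arguments ncl_conj {G A}.

Section Main.
Variables (G : group) (I : finType) (y : I -> G).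
Local Notation "x * y" := (gmul x y).
Local Notation "x ^-1" := (ginv x).
Local Notation one := (gone G).
Local Notation monic := (monic_commutator y).

Lemma dich S q : monic q -> span y S q \/ Nker y S q.
Proof.
elim=> [i | i | a b _ ha _ hb].
- case: (boolP (i \in S)) => hi; [left|right]; apply: gen_in.
  + by exists i.
  + exists (y i), one; split; first by exists i.
    by rewrite invg1 gmul1 mulg1.
- case: (boolP (i \in S)) => hi; [left|right]; apply: gen_inv; apply: gen_in.
  + by exists i.
  + exists (y i), one; split; first by exists i.
    by rewrite invg1 gmul1 mulg1.
- case: ha => ha.
  + case: hb => hb.
    * left; rewrite /gcomm; apply: gen_mul; first exact: gen_inv.
      apply: gen_mul; first exact: gen_inv. exact: gen_mul.
    * right; have -> : gcomm a b = conj a (b^-1) * b by rewrite /gcomm /conj !gmulA.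
      apply: gen_mul => //; apply: ncl_conj; exact: gen_inv.
  + right; rewrite /gcomm; apply: gen_mul; first exact: gen_inv.
    exact: ncl_conj.
Qed.

Lemma ret_one S b : retractive y S -> span y S b -> Nker y S b -> b = one.
Proof.
move=> hS hb hN; symmetry; apply: hS => //; first exact: gen_one.
by rewrite /rho_eq invg1 gmul1.
Qed.

Definition C (L : seq {set I}) q := monic q /\ forall S, S \in L -> Nker y S q.

Lemma C_conj L z c : monic z -> C L c -> gen (C L) (conj z c).
Proof.
move=> mz [mc hc]; rewrite conj_comm; apply: gen_mul; first exact: gen_in.
apply: gen_in; split; first exact: monic_comm.
move=> S hS; rewrite /gcomm; apply: gen_mul; first exact: gen_inv (hc S hS).
exact: ncl_conj (hc S hS).
Qed.

Lemma M_conj L h : gen (fun g => exists i, g = y i) h ->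
  forall m, gen (C L) m -> gen (C L) (conj h m) /\ gen (C L) (conj (h^-1) m).
Proof.
elim=> {h} [h [i ->] | | h1 h2 _ h1P _ h2P | h _ hP] m hm.
- split; apply: gen_conj hm => a ha; apply: C_conj ha; constructor.
- by rewrite invg1 conj_one.
- rewrite conjMg invMg conjMg.
  have [a1 a2] := h1P m hm.
  split; first by have [] := h2P _ a1.
  have [] := h2P _ hm => _ b2. by have [] := h1P _ b2.
- rewrite invgK; have [] := hP m hm => a b; by split.
Qed.

Lemma step (y_gen : forall g : G, gen (fun h => exists i, h = y i) g)
  S L g : retractive y S -> gen (C L) g ->
  exists b, span y S b /\ gen (C (S :: L)) (g * b^-1).
Proof.
move=> hS; elim=> {g} [x [mx hx] | | x z _ [b1 [s1 m1]] _ [b2 [s2 m2]] | x _ [b [sb mb]]].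
- case: (dich S mx) => h.
  + exists x; split => //; rewrite mulgV; exact: gen_one.
  + exists one; split; first exact: gen_one.
    rewrite invg1 mulg1; apply: gen_in; split => // S'; rewrite inE.
    by case/orP => [/eqP -> | /hx].
- exists one; split; first exact: gen_one.
  rewrite invg1 mulg1; exact: gen_one.
- exists (b1 * b2); split; first exact: gen_mul.
  have -> : x * z * (b1 * b2)^-1 = (x * b1^-1) * conj (b1^-1) (z * b2^-1).
    by rewrite /conj invgK invMg !gmulA mulgVK.
  apply: gen_mul => //; by have [] := M_conj (y_gen b1) m2.
- exists (b^-1); split; first exact: gen_inv.
  have -> : x^-1 * b^-1^-1 = conj b ((x * b^-1)^-1).
    by rewrite /conj invMg !invgK !gmulA gmulV gmul1.
  by have [] := M_conj (y_gen b) (gen_inv mb).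
Qed.

Lemma C_Nker S L m : gen (C (S :: L)) m -> Nker y S m.
Proof.
apply: gen_mono => a [_ ha]; apply: ha; exact: mem_head.
Qed.

Lemma main_list (y_gen : forall g : G, gen (fun h => exists i, h = y i) g) L :
  (forall S, S \in L -> retractive y S) ->
  forall g, (forall S, S \in L -> Nker y S g) -> gen (C L) g.
Proof.
elim: L => [|S L IH] hr g hg.
- apply: gen_mono (y_gen g) => _ [i ->]; apply: gen_in; split => //; constructor.
- have hL : gen (C L) g.
    apply: IH => S' hS'; [apply: hr | apply: hg]; by rewrite inE hS' orbT.
  have [b [sb mb]] := step y_gen (hr S (mem_head _ _)) hL.
  have nb : Nker y S b.
    have -> : b = (g * b^-1)^-1 * g by rewrite invMg invgK mulgVK.
    apply: gen_mul; first exact: gen_inv (C_Nker mb).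
    apply: hg; exact: mem_head.
  have b1 := ret_one (hr S (mem_head _ _)) sb nb.
  by move: mb; rewrite b1 invg1 mulg1.
Qed.
End Main.

Theorem mainTheorem6 (G : group) (I : finType) (y : I -> G)
  (y_inj : injective y)
  (y_gen : forall g : G, gen (fun h => exists i, h = y i) g)
  (F : {set {set I}}) (hF : retractive_family y F) :
  forall g : G,
    rho_family_ker y F g <->
    gen (fun q => monic_commutator y q /\ transverse F (supp_rel y F q)) g.
Proof.
have hr : forall S, S \in F -> retractive y S.
  move=> S hS; have := hF [set S]; rewrite big_set1; apply; by rewrite sub1set.
move=> g; split.
- move=> hk.
  have hg : forall S, S \in enum F -> Nker y S g.
    move=> S; rewrite mem_enum => hS; have := hk S hS.
    rewrite /rho_eq mulg1 => /gen_inv; by rewrite invgK.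
  have hr' : forall S, S \in enum F -> retractive y S by move=> S; rewrite mem_enum; apply: hr.
  have := main_list y_gen hr' hg.
  apply: gen_mono => q [mq hq].
  case: (classic (q = gone G)) => [-> | nq]; first exact: gen_one.
  apply: gen_in; split => // S hS hsub; apply: (nq).
  have hNq : forall S', S' \in F -> Nker y S' q.
    by move=> S' hS'; apply: hq; rewrite mem_enum.
  have all_supp : forall i, supp_rel y F q i.
    move=> i S' hS' sp; exfalso; apply: (nq); exact: ret_one (hr S' hS') sp (hNq S' hS').
  apply: ret_one (hr S hS) _ (hNq S hS).
  apply: gen_mono (y_gen q) => _ [i ->]; apply: gen_in; exists i => //.
  exact: hsub (all_supp i).
- move=> hgen S hS; rewrite /rho_eq mulg1; apply: gen_inv.
  apply: gen_mono hgen => q [mq ht].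
  case: (dich S mq) => // sp; exfalso; apply: (ht S hS) => i hi; exact: hi S hS sp.
Qed.
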